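(* Let $k\ge2$ and $n\in\mathbb{Z}$ with $\mathcal{F}_{n,k}(x)$ not identically zero. Then there is a polynomial $P_{n,k}(y)\in\mathbb{Z}[y]$ with $P_{n,k}(0)\neq0$ such that $$\mathcal{F}_{n,k}(x)=x^{r_{n,k}}\,P_{n,k}(x^k).$$ In particular, if $r_{n,k}>0$ then $x=0$ is a root of $\mathcal{F}_{n,k}$ of multiplicity exactly $r_{n,k}$, and if $r_{n,k}=0$ then $x=0$ is not a root.
   Context: For $k\ge2$, the polynomials $\mathcal{F}_{n,k}(x)\in\mathbb{Z}[x]$ ($n\in\mathbb{Z}$) are defined by $\mathcal{F}_{1,k}=1$, $\mathcal{F}_{n,k}=0$ for $n=0,-1,\dots,-(k-2)$, and $\mathcal{F}_{n,k}(x)=\sum_{j=1}^{k}x^{k-j}\mathcal{F}_{n-j,k}(x)$ for all $n\in\mathbb{Z}$. This recurrence is used upwards for $n\ge2$, and downwards for $n\le-(k-1)$ as $\mathcal{F}_{n,k}=\mathcal{F}_{n+k,k}-\sum_{j=1}^{k-1}x^j\mathcal{F}_{n+j,k}$. The quantity $r_{n,k}\in\{0,\dots,k-1\}$ is defined as the residue of $(k-1)(n-1)$ modulo $k$ if $n>0$, and as the residue of $|n|+1$ modulo $k$ if $n\le0$. *)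

(* Defs.v *)
From mathcomp Require Import all_boot all_order all_algebra.
Set Implicit Arguments. Unset Strict Implicit. Unset Printing Implicit Defensive.
Import Order.TTheory GRing.Theory Num.Theory.
Local Open Scope ring_scope.

(* Upward windows: Fup_win k m = [:: F_{m+1}; F_m; ...; F_{m+2-k}] (k entries). *)
Fixpoint Fup_win (k : nat) (m : nat) : seq {poly int} :=
  match m with
  | 0%N => 1 :: nseq k.-1 0
  | m'.+1 =>
      let w := Fup_win k m' in
      (\sum_(1 <= j < k.+1) 'X^(k - j) * nth 0 w j.-1) :: take k.-1 w
  end.

(* Downward windows: Fdown_win k m = [:: F_a; F_{a+1}; ...; F_{a+k-1}]
   with a = -(k-2) - m  (k entries). Uses F_n = F_{n+k} - sum_{i=1}^{k-1} x^i F_{n+i}. *)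
Fixpoint Fdown_win (k : nat) (m : nat) : seq {poly int} :=
  match m with
  | 0%N => rcons (nseq k.-1 0) 1
  | m'.+1 =>
      let w := Fdown_win k m' in
      (nth 0 w k.-1 - \sum_(1 <= i < k) 'X^i * nth 0 w i.-1) :: take k.-1 w
  end.

Definition Fpoly (k : nat) (n : int) : {poly int} :=
  match n with
  | Posz m.+1 => head 0 (Fup_win k m)
  | Posz 0 => head 0 (Fdown_win k (2 - k)%N)          (* n = 0 = -(k-2) - (2-k) when k = 2; else 0 *)
  | Negz m => head 0 (Fdown_win k (m.+1 + 2 - k)%N)
  end.

Definition rnk (k : nat) (n : int) : nat :=
  match n with
  | Posz m.+1 => ((k.-1 * m) %% k)%N
  | Posz 0 => (1 %% k)%N
  | Negz m => (m.+2 %% k)%N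
  end.

(* Main.v *)
Require Import Defs.
From mathcomp Require Import all_boot all_order all_algebra.
From mathcomp Require Import zify ring.
Set Implicit Arguments. Unset Strict Implicit. Unset Printing Implicit Defensive.
Import Order.TTheory GRing.Theory Num.Theory.
Local Open Scope ring_scope.

Definition uu (k i : nat) : {poly int} :=
  if (k.-1 <= i)%N then head 0 (Fup_win k (i - k.-1)) else 0.
Definition hh (k i : nat) : {poly int} :=
  if (k.-1 <= i)%N then head 0 (Fdown_win k (i - k.-1))
  else if i == 0%N then 1 else 0.

Lemma uu_win k m t : (1 < k)%N -> (t < k)%N ->
  nth 0 (Fup_win k m) t = uu k (m + k.-1 - t).
Proof.
move=> hk; elim: m t => [|m IH] [|t] ht /=.
- by rewrite /uu add0n subn0 leqnn subnn.
- rewrite nth_nseq if_same /uu ifF //; apply/negbTE; lia.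
- by rewrite /uu subn0 leq_addl addnK.
- rewrite nth_take; last lia.
  rewrite IH; last lia. congr uu; lia.
Qed.

Lemma uu_rec k i : (1 < k)%N -> (k <= i)%N ->
  uu k i = \sum_(1 <= j < k.+1) 'X^(k - j) * uu k (i - j).
Proof.
move=> hk hi.
have -> : uu k i = head 0 (Fup_win k (i - k).+1).
  rewrite /uu ifT; last lia. congr (head 0 (Fup_win k _)); lia.
rewrite /=; apply: eq_big_nat => j /andP [j1 j2].
rewrite uu_win //; last lia. congr (_ * uu k _); lia.
Qed.

Lemma hh_win k m t : (1 < k)%N -> (t < k)%N ->
  nth 0 (Fdown_win k m) t = hh k (k.-1 + m - t).
Proof.
move=> hk; elim: m t => [|m IH] t ht /=.
- rewrite nth_rcons size_nseq.
  case: (ltnP t k.-1) => h1.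
  + rewrite nth_nseq h1 /hh addn0.
    case: (leqP k.-1 (k.-1 - t)) => h2.
    * have t0 : t = 0%N by lia.
      rewrite t0 subn0 subnn /=; move: h1; rewrite t0; by case: (k.-1).
    * rewrite ifF //; apply/negbTE; lia.
  + have -> : t = k.-1 by lia.
    by rewrite eqxx addn0 subnn /hh ifF //; apply/negbTE; lia.
- case: t ht => [|t] ht /=.
  + by rewrite /hh subn0 ifT ?leq_addr // addKn.
  + rewrite nth_take; last lia.
    rewrite IH; last lia. congr hh; lia.
Qed.

Lemma hh_rec k i : (1 < k)%N -> (k <= i)%N ->
  hh k i = hh k (i - k) - \sum_(1 <= j < k) 'X^j * hh k (i - j).
Proof.
move=> hk hi.
have -> : hh k i = head 0 (Fdown_win k (i - k).+1).
  rewrite /hh ifT; last lia. congr (head 0 (Fdown_win k _)); lia.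
rewrite /= hh_win //; last lia.
congr (hh k _ - _); first lia.
apply: eq_big_nat => j /andP [j1 j2].
rewrite hh_win //; last lia. congr (_ * hh k _); lia.
Qed.

Lemma hh0 k : (1 < k)%N -> hh k 0 = 1.
Proof. by move=> hk; rewrite /hh ifF //; apply/negbTE; lia. Qed.

Lemma hh_small k i : (1 < k)%N -> (0 < i)%N -> (i < k)%N -> hh k i = 0.
Proof.
move=> hk h1 h2; rewrite /hh; case: leqP => h3.
- have -> : (i - k.-1 = 0)%N by lia.
  rewrite /=; have: (0 < k.-1)%N by lia. by case: (k.-1).
- by rewrite ifF //; apply/negbTE; lia.
Qed.

Definition homk (k : nat) (p : {poly int}) (s : nat) :=
  forall d, p`_d != 0 -> ((d + s) %% k = 0)%N.

Lemma hom0 k s : homk k 0 s.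
Proof. by move=> d; rewrite coef0 eqxx. Qed.

Lemma hom1 k s : (s %% k = 0)%N -> homk k 1 s.
Proof. by move=> hs d; rewrite coef1; case: d => //=. Qed.

Lemma homD k p q s : homk k p s -> homk k q s -> homk k (p + q) s.
Proof.
move=> hp hq d; rewrite coefD; case: (eqVneq p`_d 0) => [->|/hp //].
by rewrite add0r => /hq.
Qed.

Lemma homN k p s : homk k p s -> homk k (- p) s.
Proof. by move=> hp d; rewrite coefN oppr_eq0 => /hp. Qed.

Lemma homB k p q s : homk k p s -> homk k q s -> homk k (p - q) s.
Proof. by move=> hp hq; apply: homD => //; apply: homN. Qed.

Lemma homX k p s j t : homk k p s -> ((j + t) %% k = s %% k)%N ->
  homk k ('X^j * p) t.
Proof.
move=> hp hjt d; rewrite coefXnM; case: (ltnP d j) => // hd /hp h.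
have -> : (d + t = (d - j) + (j + t))%N by lia.
by rewrite -modnDmr hjt modnDmr.
Qed.

Lemma homX1 k p s t : homk k p s -> ((1 + t) %% k = s %% k)%N ->
  homk k ('X * p) t.
Proof. by move=> hp h; rewrite -['X]expr1; apply: homX h. Qed.

Lemma hom_sum k (r : seq nat) (F : nat -> {poly int}) s :
  (forall j, j \in r -> homk k (F j) s) -> homk k (\sum_(j <- r) F j) s.
Proof.
elim: r => [|a r IH] H; first by rewrite big_nil; apply: hom0.
rewrite big_cons; apply: homD; first by apply: H; rewrite inE eqxx.
by apply: IH => j jr; apply: H; rewrite inE jr orbT.
Qed.

Lemma hom_decomp k p s r : (0 < k)%N -> homk k p s -> (r < k)%N ->
  ((r + s) %% k = 0)%N ->
  exists P : {poly int}, p = 'X^r * (P \Po 'X^k) /\ P`_0 = p`_r.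
Proof.
move=> k0 hp rk hrs.
exists (\poly_(i < size p) p`_(r + i * k)); split; last first.
  rewrite coef_poly mul0n addn0; case: ltnP => // hs.
  by rewrite nth_default // (leq_trans hs).
apply/polyP => d; rewrite coefXnM coef_comp_poly_Xn // coef_poly.
case: (eqVneq p`_d 0) => [pd0|/hp hd].
  rewrite pd0; case: ltnP => // hdr; case: ifP => // hkd; case: ltnP => // hsz.
  by rewrite divnK // subnKC.
have e : (d == r %[mod k]).
  by rewrite -(eqn_modDr s); apply/eqP; rewrite hd hrs.
case: (ltnP d r) => hdr.
  move/eqP: e; rewrite (modn_small rk) modn_small; [lia | lia].
have hkd : (k %| d - r)%N by rewrite -eqn_mod_dvd.
rewrite hkd divnK // subnKC //.
case: ltnP => // hsz; rewrite nth_default //.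
apply: leq_trans hsz _; apply: leq_trans (leq_div _ _) _; lia.
Qed.

Lemma uu_lt k i : (i < k.-1)%N -> uu k i = 0.
Proof. by move=> h; rewrite /uu leqNgt h. Qed.

Lemma uu_base k : (1 < k)%N -> uu k k.-1 = 1.
Proof. by move=> hk; rewrite /uu leqnn subnn. Qed.

Lemma uu_cases k i : (1 < k)%N ->
  [\/ (i < k.-1)%N, i = k.-1 | (k <= i)%N].
Proof.
move=> hk; case: (ltnP i k.-1) => h; first by constructor 1.
case: (eqVneq i k.-1) => e; first by constructor 2.
constructor 3; lia.
Qed.

Lemma uu_ge0 k i d : (1 < k)%N -> 0 <= (uu k i)`_d.
Proof.
move=> hk; elim/ltn_ind: i d => i IH d.
case: (uu_cases i hk) => [h|->|h].
- by rewrite uu_lt // coef0.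
- by rewrite uu_base // coef1; case: (d == 0%N).
- rewrite uu_rec // coef_sum big_seq; apply: sumr_ge0 => j.
  rewrite mem_index_iota => hj.
  rewrite coefXnM; case: ltnP => // _; apply: IH; lia.
Qed.

Lemma uu_hom k i : (1 < k)%N -> homk k (uu k i) i.+1.
Proof.
move=> hk; elim/ltn_ind: i => i IH.
case: (uu_cases i hk) => [h|->|h].
- rewrite uu_lt //; exact: hom0.
- rewrite uu_base //; apply: hom1; rewrite prednK ?modnn //; lia.
- rewrite uu_rec //; apply: hom_sum => j.
  rewrite mem_index_iota => hj.
  apply: (homX (s := (i - j).+1)); first by apply: IH; lia.
  have -> : (k - j + i.+1 = (i - j).+1 + k)%N by lia.
  by rewrite modnDr.
Qed.

Lemma uu_pos k i r : (1 < k)%N -> (k.-1 <= i)%N -> (r < k)%N ->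
  ((r + i.+1) %% k = 0)%N -> 0 < (uu k i)`_r.
Proof.
move=> hk; elim/ltn_ind: i r => i IH r hi hr hri.
case: (uu_cases i hk) => [h|e|h].
- lia.
- have r0 : r = 0%N.
    move: hri; rewrite e prednK; last lia.
    rewrite -modnDmr modnn addn0 modn_small //.
  by rewrite e uu_base // r0 coef1.
- rewrite uu_rec // coef_sum.
  rewrite (bigD1_seq (k - r)%N) /=; last 2 first.
  + rewrite mem_index_iota; lia.
  + exact: iota_uniq.
  apply: ltr_wpDr.
    apply: sumr_ge0 => j _; rewrite coefXnM; case: ltnP => // _.
    exact: uu_ge0.
  have -> : (k - (k - r) = r)%N by lia.
  rewrite coefXnM ltnn subnn.
  have e : (r + i.+1 = (i - (k - r)).+1 + k)%N by lia.
  rewrite e modnDr in hri.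
  have hk' : (k <= (i - (k - r)).+1)%N.
    by apply: dvdn_leq => //; rewrite /dvdn hri.
  apply: IH; [lia | lia | lia | by rewrite add0n].
Qed.

Lemma hh_k k : (1 < k)%N -> hh k k = 1.
Proof.
move=> hk; rewrite hh_rec // subnn hh0 // big_nat big1 ?subr0 // => j hj.
by rewrite hh_small ?mulr0 //; lia.
Qed.

Lemma hh_sparse k i : (1 < k)%N -> (k < i)%N ->
  hh k i = (1 + 'X^k) * hh k (i - k) - 'X * hh k (i - k - 1).
Proof.
move=> hk hi.
set T := \sum_(1 <= j < k.+1) 'X^j * hh k (i - j).
have e1 : T = \sum_(1 <= j < k) 'X^j * hh k (i - j) + 'X^k * hh k (i - k).
  by rewrite /T big_nat_recr // ltnW.
have e2 : T = 'X * hh k (i - 1) + 'X * \sum_(1 <= j < k) 'X^j * hh k (i.-1 - j).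
  rewrite /T big_nat_recl; last lia. rewrite expr1; congr (_ + _).
  rewrite mulr_sumr; apply: eq_bigr => j _.
  rewrite exprS mulrA; congr (_ * hh k _); lia.
have r1 := hh_rec hk (ltnW hi).
have r2 : hh k i.-1 = hh k (i.-1 - k) - \sum_(1 <= j < k) 'X^j * hh k (i.-1 - j).
  by apply: hh_rec; lia.
have -> : (i - k - 1 = i.-1 - k)%N by lia.
move: e1 e2; rewrite r1; move: r2.
set S2 := \sum_(1 <= j < k) _.
set S1 := \sum_(1 <= j < k) _.
move=> r2 e1 e2.
have eS1 : S1 = T - 'X^k * hh k (i - k) by rewrite e1; ring.
rewrite eS1 e2 (_ : (i - 1 = i.-1)%N); last lia. rewrite r2; ring.
Qed.

Lemma hh_claim k a b : (1 < k)%N -> (b < k)%N ->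
  homk k (hh k (k * a + b)) (k - b) /\
  (hh k (k * a + b))`_b = (-1) ^+ b * ('C(a, b))%:R /\
  ((a < b)%N -> hh k (k * a + b) = 0).
Proof.
move=> hk; elim/ltn_ind: a b => a IH b hb.
case: a IH => [|a] IH.
  rewrite muln0 add0n; case: b hb => [|b] hb.
    rewrite hh0 // subn0; split; first by apply: hom1; rewrite modnn.
    by rewrite coef1 expr0 mul1r bin0.
  rewrite hh_small //; split; first exact: hom0.
  by rewrite coef0 bin0n mulr0.
case: b hb => [|b] hb.
  case: a IH => [|a] IH.
    rewrite muln1 addn0 hh_k // subn0 bin0 expr0 mul1r; split.
      by apply: hom1; rewrite modnn.
    by rewrite coef1.
  have [hp [cp _]] := IH a.+1 (ltnSn _) 0%N (ltnW hk).
  have hk1 : (k.-1 < k)%N by lia.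
  have [hq _] := IH a (ltnW (ltnSn _)) k.-1 hk1.
  rewrite (hh_sparse hk); last by rewrite mulnS; lia.
  have -> : (k * a.+2 + 0 - k = k * a.+1 + 0)%N by rewrite !mulnS; lia.
  have -> : (k * a.+1 + 0 - 1 = k * a + k.-1)%N by rewrite !mulnS; lia.
  split.
    apply: homB.
      rewrite mulrDl mul1r; apply: homD => //.
      by apply: (homX (s := (k - 0)%N)); [ | rewrite modnDl].
    apply: (homX1 (s := (k - k.-1)%N)); first exact hq.
    have -> : (k - k.-1 = 1)%N by lia.
    by rewrite subn0 modnDr.
  split; last by rewrite ltn0.
  rewrite mulrDl mul1r coefB coefD coefXnM ifT; last lia.
  rewrite coefXM eqxx cp !bin0; ring.
have [hp [cp zp]] := IH a (ltnSn _) b.+1 hb.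
have [hq [cq zq]] := IH a (ltnSn _) b (ltnW hb).
rewrite (hh_sparse hk); last by rewrite mulnS; lia.
have -> : (k * a.+1 + b.+1 - k = k * a + b.+1)%N by rewrite !mulnS; lia.
have -> : (k * a + b.+1 - 1 = k * a + b)%N by lia.
split.
  apply: homB.
    rewrite mulrDl mul1r; apply: homD => //.
    by apply: (homX (s := (k - b.+1)%N)); [ | rewrite modnDl].
  apply: (homX1 (s := (k - b)%N)); first exact hq.
  by have -> : (1 + (k - b.+1) = k - b)%N by lia.
split.
  rewrite mulrDl mul1r coefB coefD coefXnM ifT; last lia.
  rewrite coefXM /= cp cq binS natrD exprS; ring.
move=> hab; rewrite zp; last lia. rewrite zq; last lia. by rewrite !mulr0 subr0.
Qed.

Lemma finish k r (p P : {poly int}) : (0 < k)%N -> P`_0 != 0 ->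
  p = 'X^r * (P \Po 'X^k) ->
  (exists P : {poly int}, P.[0] != 0 /\ p = 'X^r * (P \Po 'X^k))
  /\ ((0 < r)%N -> root p 0 /\
       exists Q : {poly int}, p = 'X^r * Q /\ ~~ root Q 0)
  /\ (r = 0%N -> ~~ root p 0).
Proof.
move=> k0 hP hp.
have hQ : (P \Po 'X^k).[0] = P`_0.
  by rewrite horner_comp hornerXn expr0n eqn0Ngt k0 /= horner_coef0.
split; first by exists P; rewrite horner_coef0.
split.
  move=> r0; split.
    by rewrite /root hp hornerM hornerXn expr0n eqn0Ngt r0 mul0r.
  by exists (P \Po 'X^k); split => //; rewrite /root hQ.
by move=> r0; rewrite /root hp r0 expr0 mul1r hQ.
Qed.

Lemma uu_main k i r : (1 < k)%N -> (k.-1 <= i)%N -> (r < k)%N ->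
  ((r + i.+1) %% k = 0)%N ->
  exists P : {poly int}, P`_0 != 0 /\ uu k i = 'X^r * (P \Po 'X^k).
Proof.
move=> hk hi hr hri.
have [P [e c]] := hom_decomp (ltnW hk) (@uu_hom k i hk) hr hri.
exists P; split => //; rewrite c; apply: lt0r_neq0; exact: uu_pos.
Qed.

Lemma hh_main k i : (1 < k)%N -> hh k i != 0 ->
  exists P : {poly int}, P`_0 != 0 /\ hh k i = 'X^(i %% k) * (P \Po 'X^k).
Proof.
move=> hk hne.
have k0 : (0 < k)%N by lia.
have [hom [co z]] := @hh_claim k (i %/ k) (i %% k) hk (ltn_pmod i k0).
rewrite mulnC -divn_eq in hom co z.
have hrs : ((i %% k + (k - i %% k)) %% k = 0)%N.
  by rewrite subnKC ?modnn // ltnW // ltn_pmod.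
have [P [e c]] := hom_decomp k0 hom (ltn_pmod i k0) hrs.
exists P; split => //; rewrite c co.
have hab : (i %% k <= i %/ k)%N.
  rewrite leqNgt; apply/negP => /z h; by rewrite h eqxx in hne.
rewrite mulf_neq0 ?signr_eq0 // pnatr_eq0 -lt0n bin_gt0 //.
Qed.

Theorem mainTheorem12 (k : nat) (n : int) :
  (2 <= k)%N -> Fpoly k n != 0 ->
  (exists P : {poly int},
      P.[0] != 0 /\ Fpoly k n = 'X^(rnk k n) * (P \Po 'X^k))
  /\ ((0 < rnk k n)%N -> root (Fpoly k n) 0 /\
       exists Q : {poly int}, Fpoly k n = 'X^(rnk k n) * Q /\ ~~ root Q 0)
  /\ (rnk k n = 0%N -> ~~ root (Fpoly k n) 0).
Proof.
move=> hk hne.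
have k0 : (0 < k)%N by lia.
case: n hne => [[|m]|m] hne.
- exfalso; move: hne.
  rewrite /Fpoly -nth0 hh_win // hh_small ?eqxx //; lia.
- have eF : Fpoly k m.+1 = uu k (m + k.-1) by rewrite /Fpoly -nth0 uu_win // subn0.
  have eR : rnk k m.+1 = ((k.-1 * m) %% k)%N by [].
  rewrite eR eF in hne *.
  have hri : (((k.-1 * m) %% k + (m + k.-1).+1) %% k = 0)%N.
    rewrite modnDml (_ : (k.-1 * m + (m + k.-1).+1 = k * m.+1)%N) ?modnMr //.
    case: k hk {hne eF eR k0} => [|k] //= _; rewrite mulSn mulnS; lia.
  have [P [hP e]] := uu_main hk (leq_addl _ _) (ltn_pmod _ k0) hri.
  exact: finish k0 hP e.
- have eR : rnk k (Negz m) = (m.+2 %% k)%N by [].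
  have eF : Fpoly k (Negz m) = hh k (k.-1 + (m.+1 + 2 - k) - 0)
    by rewrite /Fpoly -nth0 hh_win.
  rewrite eR eF in hne *.
  case: (leqP k m.+3) => hkm.
    rewrite (_ : (k.-1 + (m.+1 + 2 - k) - 0 = m.+2)%N) in hne *; last lia.
    have [P [hP e]] := hh_main hk hne.
    exact: finish k0 hP e.
  exfalso; move: hne; rewrite hh_small ?eqxx //; lia.
Qed.
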